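(* Let $\varphi$ be a bounded setfunction defined on a set-algebra $(J,\mathcal{B})$, with $\varphi(\emptyset)=0$. Then there exists a sequence $(\varphi_n\colon n\in\mathbb{N})$ of finite quotients of $\varphi$ such that $\varphi_n\rightarrowtail\varphi$.
   Context: A set-algebra $(J,\mathcal{B})$ is a family of subsets of $J$ containing $\emptyset$ and closed under complement and finite union; a setfunction on it is a map $\mathcal{B}\to\mathbb{R}$. For $k\in\mathbb{N}$ and a map $F\colon J\to[k]$ with $F^{-1}(i)\in\mathcal{B}$ for every $i$, the quotient $\varphi\circ F^{-1}$ is the setfunction $A\mapsto\varphi(F^{-1}(A))$ on $2^{[k]}$ (a finite quotient); $Q_k(\varphi)\subseteq\mathbb{R}^{2^k}$ is the set of all quotients of $\varphi$ on $[k]$. $\varphi_n\rightarrowtail\varphi$ means that for every $k\in\mathbb{N}$ the Hausdorff distance in Euclidean $\mathbb{R}^{2^k}$ between $Q_k(\varphi_n)$ and $Q_k(\varphi)$ tends to $0$. *)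

(* Defs.v *)
From HB Require Import structures.
From mathcomp Require Import all_boot all_order all_algebra.
From mathcomp Require Import all_classical all_reals all_analysis.
Set Implicit Arguments. Unset Strict Implicit. Unset Printing Implicit Defensive.
Import Order.TTheory GRing.Theory Num.Theory.
Local Open Scope classical_set_scope.
Local Open Scope ring_scope.

Definition is_set_algebra (J : Type) (B : set (set J)) : Prop :=
  [/\ B set0,
      (forall A, B A -> B (~` A)) &
      (forall A C, B A -> B C -> B (A `|` C))].

(* A setfunction on (J,B) is represented by phi : set J -> R; only its values
   on B matter.  It is bounded if |phi| is bounded on B. *)
Definition bounded_setfun (R : realType) (J : Type) (B : set (set J))
  (phi : set J -> R) : Prop :=
  exists M : R, forall A, B A -> `|phi A| <= M.

Definition meas_map (J : Type) (B : set (set J)) (k : nat) (F : J -> 'I_k) : Prop :=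
  forall i : 'I_k, B (F @^-1` [set i]).

Definition quot (R : realType) (J : Type) (phi : set J -> R) (k : nat)
  (F : J -> 'I_k) : {set 'I_k} -> R :=
  fun A => phi (F @^-1` [set i | i \in A]).

Definition Qk (R : realType) (J : Type) (B : set (set J)) (phi : set J -> R)
  (k : nat) : set ({set 'I_k} -> R) :=
  [set psi | exists F : J -> 'I_k, meas_map B F /\ psi = quot phi F].

(* Q_k(psi) for a setfunction psi on the full set-algebra 2^[m]
   (every map [m] -> [k] is measurable). *)
Definition Qk_fin (R : realType) (m : nat) (psi : {set 'I_m} -> R) (k : nat)
  : set ({set 'I_k} -> R) :=
  [set chi | exists G : 'I_m -> 'I_k, chi = fun A : {set 'I_k} => psi (finset (fun x => G x \in A))].

Definition finite_quotient (R : realType) (J : Type) (B : set (set J))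
  (phi : set J -> R) (m : nat) (psi : {set 'I_m} -> R) : Prop :=
  exists F : J -> 'I_m, meas_map B F /\ psi = quot phi F.

Definition eucl (R : realType) (k : nat) (u v : {set 'I_k} -> R) : R :=
  Num.sqrt (\sum_(A : {set 'I_k}) (u A - v A) ^+ 2).

Definition hausdorff (R : realType) (T : Type) (d : T -> T -> R)
  (X Y : set T) : \bar R :=
  maxe (ereal_sup [set ereal_inf [set (d x y)%:E | y in Y] | x in X])
       (ereal_sup [set ereal_inf [set (d x y)%:E | x in X] | y in Y]).

Definition conv_quot (R : realType) (J : Type) (B : set (set J))
  (phi : set J -> R) (m : nat -> nat) (psi : forall n, {set 'I_(m n)} -> R)
  : Prop :=
  forall k : nat, (0 < k)%N ->
    (fun n => hausdorff (@eucl R k) (@Qk_fin R (m n) (psi n) k) (@Qk R J B phi k))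
      @ \oo --> (0 : \bar R)%E.

(* Main.v *)
Require Import Defs.
From HB Require Import structures.
From mathcomp Require Import all_boot all_order all_algebra.
From mathcomp Require Import all_classical all_reals all_analysis.
From mathcomp Require Import ring lra.
Import Order.TTheory GRing.Theory Num.Theory.
Local Open Scope classical_set_scope.
Local Open Scope ring_scope.
Set Implicit Arguments. Unset Strict Implicit. Unset Printing Implicit Defensive.

Lemma sa_setT (J : Type) (B : set (set J)) : is_set_algebra B -> B setT.
Proof. by case=> h0 hC _; rewrite -setC0; apply: hC. Qed.

Lemma sa_inter (J : Type) (B : set (set J)) : is_set_algebra B ->
  forall A C, B A -> B C -> B (A `&` C).
Proof.
case=> h0 hC hU A C hA hc.
by rewrite -[A]setCK -[C]setCK -setCU; apply/hC/hU; apply: hC.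
Qed.

Lemma sa_seq (J : Type) (B : set (set J)) (hB : is_set_algebra B) c
  (F : J -> 'I_c) : meas_map B F -> forall s : seq 'I_c, B [set x | F x \in s].
Proof.
move=> mF; elim=> [|a s IH].
  have -> : [set x | F x \in [::]] = set0 by apply/funext => x; apply/propext.
  by case: hB.
have -> : [set x | F x \in a :: s] = F @^-1` [set a] `|` [set x | F x \in s].
  apply/funext => x /=; apply/propext; rewrite in_cons; split.
    by case/orP => [/eqP ->|h]; [left|right].
  by case => [->|h]; rewrite ?eqxx ?h ?orbT.
by case: hB => _ _ hU; apply: hU.
Qed.

Lemma meas_quot_set (J : Type) (B : set (set J)) (hB : is_set_algebra B) c
  (F : J -> 'I_c) : meas_map B F -> forall A : {set 'I_c},
  B (F @^-1` [set i | i \in A]).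
Proof.
move=> mF A; have -> : F @^-1` [set i | i \in A] = [set x | F x \in enum A].
  by apply/funext => x /=; rewrite mem_enum.
exact: sa_seq.
Qed.

Lemma meas_comp (J : Type) (B : set (set J)) (hB : is_set_algebra B) c k
  (F : J -> 'I_c) (G : 'I_c -> 'I_k) : meas_map B F -> meas_map B (G \o F).
Proof.
move=> mF j.
have -> : (G \o F) @^-1` [set j] = [set x | F x \in [seq i <- enum 'I_c | G i == j]].
  apply/funext => x /=; apply/propext; rewrite mem_filter mem_enum andbT.
  by split => [->|/eqP].
exact: sa_seq.
Qed.

Definition Fine (J : Type) a b (F : J -> 'I_a) (F1 : J -> 'I_b) : Prop :=
  exists G : 'I_a -> 'I_b, forall x, F1 x = G (F x).

Definition Refinable (J : Type) (B : set (set J))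
  (S : forall k, (J -> 'I_k) -> Prop) : Prop :=
  exists c (F : J -> 'I_c), meas_map B F /\ forall k (F1 : J -> 'I_k), S k F1 -> Fine F F1.

Lemma Fine_trans (J : Type) a b d (F : J -> 'I_a) (F1 : J -> 'I_b) (F2 : J -> 'I_d) :
  Fine F F1 -> Fine F1 F2 -> Fine F F2.
Proof. by case=> G hG [H hH]; exists (H \o G) => x; rewrite hH hG. Qed.

Lemma refine2 (J : Type) (B : set (set J)) (hB : is_set_algebra B) a b
  (F1 : J -> 'I_a) (F2 : J -> 'I_b) : meas_map B F1 -> meas_map B F2 ->
  exists c (F : J -> 'I_c), meas_map B F /\ Fine F F1 /\ Fine F F2.
Proof.
move=> m1 m2.
exists #|{: 'I_a * 'I_b}|, (fun x => enum_rank ((F1 x, F2 x) : 'I_a * 'I_b)).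
split; last split.
- move=> i.
  have -> : (fun x => enum_rank ((F1 x, F2 x) : 'I_a * 'I_b)) @^-1` [set i] =
    F1 @^-1` [set (enum_val i).1] `&` F2 @^-1` [set (enum_val i).2].
    apply/funext => x /=; apply/propext; split.
      by move=> <-; rewrite enum_rankK.
    case=> h1 h2; rewrite (_ : (F1 x, F2 x) = enum_val i) ?enum_valK //.
    by rewrite h1 h2; case: (enum_val i).
  by apply: (sa_inter hB); [apply: m1|apply: m2].
- by exists (fun j => (enum_val j).1) => x; rewrite enum_rankK.
- by exists (fun j => (enum_val j).2) => x; rewrite enum_rankK.
Qed.

Lemma const_meas (J : Type) (B : set (set J)) (hB : is_set_algebra B) :
  meas_map B (fun _ : J => (ord0 : 'I_1)).
Proof.
move=> i; have -> : (fun _ : J => (ord0 : 'I_1)) @^-1` [set i] = setT.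
  by apply/funext => x /=; apply/propext; split => // _; rewrite (ord1 i).
exact: sa_setT.
Qed.

Lemma ref0 (J : Type) (B : set (set J)) (hB : is_set_algebra B) :
  Refinable B (fun _ _ => False).
Proof. by exists 1, (fun _ => ord0); split => //; exact: const_meas. Qed.

Lemma ref_mono (J : Type) (B : set (set J)) (S1 S2 : forall k, (J -> 'I_k) -> Prop) :
  (forall k F1, S1 k F1 -> S2 k F1) -> Refinable B S2 -> Refinable B S1.
Proof. by move=> h [c [F [mF hF]]]; exists c, F; split => // k F1 /h; apply: hF. Qed.

Lemma ref_union (J : Type) (B : set (set J)) (hB : is_set_algebra B)
  (S1 S2 : forall k, (J -> 'I_k) -> Prop) :
  Refinable B S1 -> Refinable B S2 -> Refinable B (fun k F1 => S1 k F1 \/ S2 k F1).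
Proof.
move=> [c1 [G1 [m1 h1]]] [c2 [G2 [m2 h2]]].
have [c [F [mF [f1 f2]]]] := refine2 hB m1 m2.
exists c, F; split => // k F1 [/h1|/h2]; exact: Fine_trans.
Qed.

Lemma ref_fine (J : Type) (B : set (set J)) k0 (F0 : J -> 'I_k0) :
  meas_map B F0 -> Refinable B (fun k F1 => Fine F0 F1).
Proof. by move=> m; exists k0, F0. Qed.

Lemma ref_fam (J : Type) (B : set (set J)) (hB : is_set_algebra B) k p
  (Fs : 'I_p -> J -> 'I_k) : (forall i, meas_map B (Fs i)) ->
  Refinable B (fun _ F1 => exists i, Fine (Fs i) F1).
Proof.
move=> mF.
suff H : forall q, Refinable B (fun _ F1 => exists i : 'I_p, (i < q)%N /\ Fine (Fs i) F1).
  by apply: ref_mono (H p) => k' F1 [i hi]; exists i; split.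
elim=> [|q IH].
  by apply: ref_mono (ref0 hB) => k' F1 [i []].
case: (ltnP q p) => hq.
  apply: ref_mono (ref_union hB IH (ref_fine (mF (Ordinal hq)))) => k' F1 [i [hi hF]].
  move: hi; rewrite ltnS leq_eqVlt => /orP[/eqP hiq|hiq].
    by right; rewrite (_ : Ordinal hq = i) //; apply: val_inj.
  by left; exists i.
apply: ref_mono IH => k' F1 [i [hi hF]]; exists i; split => //.
exact: leq_trans (ltn_ord i) hq.
Qed.

Lemma ref_all (J : Type) (B : set (set J)) (hB : is_set_algebra B)
  (p : nat -> nat) (Fs : forall k, 'I_(p k) -> J -> 'I_k)
  (mF : forall k i, meas_map B (Fs k i)) n :
  Refinable B (fun _ F1 => exists k, (k < n)%N /\ exists i, Fine (Fs k i) F1).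
Proof.
elim: n => [|n IH].
  by apply: ref_mono (ref0 hB) => k' F1 [k []].
apply: ref_mono (ref_union hB IH (ref_fam hB (mF n))) => k' F1 [k [hk [i hi]]].
move: hk; rewrite ltnS leq_eqVlt => /orP[/eqP hkn|hkn].
  by right; subst k; exists i.
by left; exists k; split => //; exists i.
Qed.

Lemma code_close (R : realType) (M d v1 v2 : R) : 0 < d ->
  `|v1| <= M -> `|v2| <= M ->
  (inord (Num.truncn ((v1 + M) / d)) : 'I_(Num.truncn (2 * M / d)).+1) =
  inord (Num.truncn ((v2 + M) / d)) ->
  (v1 - v2) ^+ 2 <= d ^+ 2.
Proof.
move=> d0 h1 h2 heq.
have hd : d != 0 by rewrite gt_eqF.
have hx : forall v, `|v| <= M -> 0 <= (v + M) / d /\ (Num.truncn ((v + M) / d) < (Num.truncn (2 * M / d)).+1)%N.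
  move=> v hv; move: (ler_norm v) (ler_normr v) => a b.
  have hv0 : 0 <= v + M.
    by move: hv; rewrite ler_norml => /andP[]; lra.
  split; first by apply: divr_ge0 => //; exact: ltW.
  rewrite ltnS; apply: le_truncn; apply: ler_wpM2r; first by rewrite invr_ge0 ltW.
  by move: hv; rewrite ler_norml => /andP[]; lra.
have [a1 b1] := hx _ h1; have [a2 b2] := hx _ h2.
have ht : Num.truncn ((v1 + M) / d) = Num.truncn ((v2 + M) / d).
  by move/(congr1 val): heq; rewrite /= !inordK.
move: (truncn_itv a1) (truncn_itv a2); rewrite ht -!natr1.
set t := (Num.truncn _)%:R => /andP[c1 c2] /andP[c3 c4].
have e1 : v1 = (v1 + M) / d * d - M by rewrite divfK //; lra.
have e2 : v2 = (v2 + M) / d * d - M by rewrite divfK //; lra.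
rewrite e1 e2.
set x1 := (v1 + M) / d in c1 c2 e1 *; set x2 := (v2 + M) / d in c3 c4 e2 *.
have hd1 : -1 < x1 - x2 < 1 by apply/andP; split; lra.
case/andP: hd1 => l1 l2.
have -> : x1 * d - M - (x2 * d - M) = (x1 - x2) * d by ring.
rewrite exprMn; rewrite -[X in _ <= X]mul1r; apply: ler_wpM2r; first exact: sqr_ge0.
nra.
Qed.

Lemma net (R : realType) (J : Type) (B : set (set J)) (hB : is_set_algebra B)
  (phi : set J -> R) (M : R) (hM : forall A, B A -> `|phi A| <= M) k (eps : R) :
  0 < eps ->
  exists p (Fs : 'I_p -> J -> 'I_k), (forall i, meas_map B (Fs i)) /\
    forall F, meas_map B F -> exists i, eucl (quot phi (Fs i)) (quot phi F) <= eps.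
Proof.
move=> eps0.
case: (pselect (exists F0 : J -> 'I_k, meas_map B F0)) => [[F0 mF0]|nF]; last first.
  have f0 : 'I_0 -> J -> 'I_k by case=> ?; rewrite ltn0.
  exists 0, f0; split; first by case.
  by move=> F mF; exfalso; apply: nF; exists F.
pose K : R := #|{: {set 'I_k}}|%:R.
have K1 : 1 <= K by rewrite /K ler1n; apply/card_gt0P; exists (finset.set0 : {set 'I_k}).
have K0 : 0 < K by lra.
pose d := eps / K.
have d0 : 0 < d by rewrite /d divr_gt0.
have dK : d * K = eps by rewrite /d divfK // gt_eqF.
pose N := Num.truncn (2 * M / d).
pose code (F : J -> 'I_k) : {ffun {set 'I_k} -> 'I_N.+1} :=
  [ffun A => inord (Num.truncn ((quot phi F A + M) / d))].
have hc : forall c, exists F, meas_map B F /\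
    ((exists F', meas_map B F' /\ code F' = c) -> code F = c).
  move=> c; case: (pselect (exists F', meas_map B F' /\ code F' = c)) => [[F' [m e]]|ne].
    by exists F'; split => // _.
  by exists F0; split => // h; exfalso; apply: ne.
have [f hf] := choice hc.
exists #|{: {ffun {set 'I_k} -> 'I_N.+1}}|, (fun i => f (enum_val i)).
split; first by move=> i; case: (hf (enum_val i)).
move=> F mF; exists (enum_rank (code F)); rewrite enum_rankK.
have [mf ef] := hf (code F); have cf := ef (ex_intro _ F (conj mF erefl)).
rewrite /eucl.
have H : forall A, (quot phi (f (code F)) A - quot phi F A) ^+ 2 <= d ^+ 2.
  move=> A; apply: (code_close d0 (hM _ (meas_quot_set hB mf A)) (hM _ (meas_quot_set hB mF A))).
  by move/ffunP: cf => /(_ A); rewrite !ffunE.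
have hs : \sum_A (quot phi (f (code F)) A - quot phi F A) ^+ 2 <= eps ^+ 2.
  apply: le_trans (ler_sum _ (fun A _ => H A)) _.
  rewrite sumr_const -mulr_natl -/K -dK.
  have : 0 <= d ^+ 2 by exact: sqr_ge0.
  nra.
rewrite -(ger0_norm (ltW eps0)) -sqrtr_sqr ler_sqrt //; exact: sqr_ge0.
Qed.

Lemma haus_bound (R : realType) (J : Type) (B : set (set J)) (hB : is_set_algebra B)
  (phi : set J -> R) c (F : J -> 'I_c) (mF : meas_map B F) k (hk : (0 < k)%N)
  (e : R) (e0 : 0 <= e)
  (H : forall F1 : J -> 'I_k, meas_map B F1 -> exists F', meas_map B F' /\
      Fine F F' /\ eucl (quot phi F') (quot phi F1) <= e) :
  (0 <= hausdorff (@eucl R k) (@Qk_fin R _ (quot phi F) k) (@Qk R J B phi k) <= e%:E)%E.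
Proof.
have eucl0 : forall u v, 0 <= @eucl R k u v by move=> u v; exact: sqrtr_ge0.
have eucl_refl : forall u, @eucl R k u u = 0.
  move=> u; rewrite /eucl (eq_bigr (fun _ => 0)) ?big1 ?sqrtr0 // => A _.
  by rewrite subrr expr0n.
have fact : forall (F' : J -> 'I_k) (G : 'I_c -> 'I_k), (forall x, F' x = G (F x)) ->
    quot phi F' = (fun A => quot phi F (finset (fun x => G x \in A))).
  move=> F' G hG; apply/funext => A; rewrite /quot; congr phi.
  by apply/funext => x /=; rewrite inE hG.
have sub : forall chi, @Qk_fin R _ (quot phi F) k chi -> @Qk R J B phi k chi.
  move=> _ [G ->]; exists (G \o F); split; first exact: meas_comp.
  by rewrite (fact (G \o F) G).
apply/andP; split.
  rewrite /hausdorff le_max; apply/orP; right.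
  pose F1 := (fun _ : 'I_1 => Ordinal hk) \o (fun _ : J => (ord0 : 'I_1)).
  have m1 : meas_map B F1 by apply: meas_comp => //; exact: const_meas.
  apply: le_ereal_sup_tmp; exists (ereal_inf [set ((@eucl R k) x (quot phi F1))%:E | x in @Qk_fin R _ (quot phi F) k]).
    by exists (quot phi F1) => //; exists F1.
  by apply: le_ereal_inf_tmp => _ [x _ <-]; rewrite lee_fin.
rewrite /hausdorff ge_max; apply/andP; split.
  apply: ge_ereal_sup => _ [x hx <-]; apply: ge_ereal_inf.
  by exists ((@eucl R k) x x)%:E; [exists x => //; exact: sub | rewrite eucl_refl lee_fin].
apply: ge_ereal_sup => _ [y [F1 [m1 ->]] <-].
have [F' [m' [[G hG] he]]] := H F1 m1.
apply: ge_ereal_inf; exists ((@eucl R k) (quot phi F') (quot phi F1))%:E; last by rewrite lee_fin.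
by exists (quot phi F') => //; rewrite (fact F' G hG); exists G.
Qed.
Unset Implicit Arguments.
Theorem theorem4p1 (R : realType) (J : Type) (B : set (set J))
  (hB : is_set_algebra B) (phi : set J -> R)
  (hbd : bounded_setfun B phi) (h0 : phi set0 = 0) :
  exists (m : nat -> nat) (psi : forall n, {set 'I_(m n)} -> R),
    (forall n, finite_quotient B phi (psi n)) /\ conv_quot B phi psi.
Proof.
case: hbd => M hM.
pose eps n : R := n.+1%:R^-1.
have main : forall n, exists s : {c : nat & J -> 'I_c}, meas_map B (projT2 s) /\
   forall k, (k <= n)%N -> forall F1 : J -> 'I_k, meas_map B F1 ->
   exists F', meas_map B F' /\ Fine (projT2 s) F' /\
     eucl (quot phi F') (quot phi F1) <= eps n.
  move=> n.
  have e0 : 0 < eps n by rewrite /eps invr_gt0 ltr0n.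
  have hnet : forall k, exists s : {p : nat & 'I_p -> J -> 'I_k},
      (forall i, meas_map B (projT2 s i)) /\ forall F, meas_map B F ->
      exists i, eucl (quot phi (projT2 s i)) (quot phi F) <= eps n.
    move=> k; have [p [Fs [h1 h2]]] := net hB hM k e0.
    by exists (existT _ p Fs).
  pose sk k := proj1_sig (cid (hnet k)).
  pose p k := projT1 (sk k).
  pose Fs k : 'I_(p k) -> J -> 'I_k := projT2 (sk k).
  have mFs : forall k i, meas_map B (Fs k i) := fun k => (proj2_sig (cid (hnet k))).1.
  have [c [F [mF hF]]] := ref_all hB mFs n.+1.
  exists (existT _ c F); split => // k hk F1 m1.
  have [i hi] := (proj2_sig (cid (hnet k))).2 F1 m1.
  exists (Fs k i); split; first exact: mFs.
  split => //; apply: hF; exists k; split => //; exists i; exists id => x //.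
pose s n := proj1_sig (cid (main n)).
exists (fun n => projT1 (s n)), (fun n => quot phi (projT2 (s n))).
split.
  by move=> n; exists (projT2 (s n)); split => //; exact: (proj2_sig (cid (main n))).1.
move=> k hk.
apply: (@squeeze_cvge _ _ _ _ (fun _ => 0%E) _ (EFin \o @harmonic R)); last first.
- exact: cvge_harmonic.
- exact: cvg_cst.
near=> n.
have [m1 h1] := proj2_sig (cid (main n)).
apply: (haus_bound hB m1 hk (ltW (harmonic_gt0 n))).
apply: h1; near: n; exact: nbhs_infty_ge.
Unshelve. all: end_near.
Qed.
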